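(* Let $\mathfrak{R}$ be an optimal reconciliation. Then there exists a minimal reconciliation $\mathfrak{R}'$ such that $\mathfrak{R}$ is a completion of $\mathfrak{R}'$.
   Context: All trees are rooted binary trees whose root node has degree 1; every other non-leaf node $x$ has exactly two children $x_l,x_r$. $G$ is a gene tree, $S$ a species tree, $\phi:L(G)\to L(S)$, with the standing assumption that the last common ancestor in $S$ of $\phi(L(G))$ is the unique child of $root(S)$. A tree $G'$ is an extension of $G$ if $G$ is obtained from $G'$ by pruning some subtrees and suppressing degree-2 nodes; $V(G)\subseteq V(G')$. A map $\rho:V(G')\to V(S)$ is consistent with $S$ (equivalently $G'$ is $\rho$-consistent) if $\rho(root(G'))=root(S)$ and every node $x$ of $G'$ with two children satisfies (D) $\rho(x)=\rho(x_l)=\rho(x_r)$ or (S) $\rho(x)_l=\rho(x_l)$ and $\rho(x)_r=\rho(x_r)$. A reconciliation $(G,G',S,\phi,\rho,\delta)$ consists of an extension $G'$ of $G$, a consistent $\rho$ with $\rho|_{L(G)}=\phi$, and an injective partial function $\delta:\Delta\to\Lambda$ with $\rho(x)=\rho(\delta(x))$, where $\Delta$ is the set of nodes with two children satisfying (D) and $\Lambda=L(G')\setminus L(G)$; $\Delta'$ = domain, $\Lambda'$ = image of $\delta$. Cost $\omega=|\Lambda\setminus\Lambda'|+|\Delta\setminus\Delta'|+|\Delta'|$; optimal = minimum cost among all reconciliations for the given $G,S,\phi$. A lost subtree is a maximal subtree $T$ of $G'$ with $V(T)\cap V(G)=\emptyset$. $\mathfrak{R}'=(G,G'',S,\phi,\rho',\delta')$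 is obtained from $\mathfrak{R}=(G,G',S,\phi,\rho,\delta)$ by loss extension if $G''$ is an extension of $G'$, $\rho'|_{V(G')}=\rho$, and they have the same number of lost subtrees; a completion of $\mathfrak{R}$ is a reconciliation of minimum cost among those obtained from $\mathfrak{R}$ by loss extension. A reconciliation $(G,G',S,\phi,\rho,\delta)$ is minimal if there is no $G''$ such that $G'$ is a proper extension of $G''$, $G''$ is an extension of $G$, and $G''$ is consistent with respect to $\rho|_{V(G'')}$. *)

(* Defs.v *)
From mathcomp Require Import all_boot.
Set Implicit Arguments. Unset Strict Implicit. Unset Printing Implicit Defensive.

(** A [btree] is a full binary
    tree (every internal node has an ordered pair of children x_l, x_r);
    an [rtree] is a rooted tree whose root has exactly one child. *)
Inductive btree : Type :=
| BLeaf (v : nat)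
| BNode (v : nat) (l r : btree).

Record rtree : Type := RTree { rroot : nat; rchild : btree }.

Definition blabel (t : btree) : nat :=
  match t with BLeaf v => v | BNode v _ _ => v end.

Fixpoint bnodes (t : btree) : seq nat :=
  match t with BLeaf v => [:: v] | BNode v l r => v :: bnodes l ++ bnodes r end.

Fixpoint bleaves (t : btree) : seq nat :=
  match t with BLeaf v => [:: v] | BNode _ l r => bleaves l ++ bleaves r end.

Fixpoint binternal (t : btree) : seq (nat * nat * nat) :=
  match t with
  | BLeaf _ => [::]
  | BNode v l r => (v, blabel l, blabel r) :: binternal l ++ binternal r
  end.

Definition rnodes (T : rtree) : seq nat := rroot T :: bnodes (rchild T).
Definition rleaves (T : rtree) : seq nat := bleaves (rchild T).
Definition rinternal (T : rtree) : seq (nat * nat * nat) := binternal (rchild T).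

Definition wf (T : rtree) : Prop := uniq (rnodes T).

Fixpoint bsub (t : btree) (s : nat) : option btree :=
  match t with
  | BLeaf v => if v == s then Some t else None
  | BNode v l r =>
      if v == s then Some t
      else match bsub l s with Some u => Some u | None => bsub r s end
  end.

Definition desc (T : rtree) (s : nat) : seq nat :=
  if rroot T == s then rnodes T
  else match bsub (rchild T) s with Some u => bnodes u | None => [::] end.

Definition is_lca (T : rtree) (A : seq nat) (s : nat) : Prop :=
  s \in rnodes T /\ {subset A <= desc T s} /\
  forall s', s' \in rnodes T -> {subset A <= desc T s'} -> s \in desc T s'.

(** * Standing setting: G gene tree, S species tree, phi : L(G) -> L(S),
    lca_S(phi(L(G))) is the unique child of root(S). *)
Definition setting (G S : rtree) (phi : nat -> nat) : Prop :=
  [/\ wf G, wf S,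
      (forall x, x \in rleaves G -> phi x \in rleaves S)
    & is_lca S (map phi (rleaves G)) (blabel (rchild S))].

(** * Extensions: G is obtained from G' by pruning subtrees and suppressing
    the resulting degree-2 nodes. [bext t' t] : t is obtained from t'. *)
Inductive bext : btree -> btree -> Prop :=
| bext_leaf v : bext (BLeaf v) (BLeaf v)
| bext_node v l' r' l r : bext l' l -> bext r' r -> bext (BNode v l' r') (BNode v l r)
| bext_pruneR v l' r' t : bext l' t -> bext (BNode v l' r') t
| bext_pruneL v l' r' t : bext r' t -> bext (BNode v l' r') t.

Definition extension (G' G : rtree) : Prop :=
  [/\ wf G', rroot G' = rroot G & bext (rchild G') (rchild G)].

Definition consistent (S : rtree) (rho : nat -> nat) (G' : rtree) : Prop :=
  rho (rroot G') = rroot S /\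
  forall x xl xr, (x, xl, xr) \in rinternal G' ->
     (rho x = rho xl /\ rho x = rho xr) \/
     (exists sl sr, (rho x, sl, sr) \in rinternal S /\ rho xl = sl /\ rho xr = sr).

Definition Delta (G' : rtree) (rho : nat -> nat) : seq nat :=
  [seq t.1.1 | t <- rinternal G' & (rho t.1.1 == rho t.1.2) && (rho t.1.1 == rho t.2)].

Definition Lambda (G G' : rtree) : seq nat :=
  [seq y <- rleaves G' | y \notin rleaves G].

(** delta : injective partial function Delta -> Lambda, given as an option-valued
    function (its values outside Delta are irrelevant). *)
Definition Delta' (G' : rtree) (rho : nat -> nat) (delta : nat -> option nat) : seq nat :=
  [seq x <- Delta G' rho | delta x != None].

Definition Lambda' (G G' : rtree) (rho : nat -> nat) (delta : nat -> option nat) : seq nat :=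
  [seq y <- Lambda G G' | has (fun x => delta x == Some y) (Delta' G' rho delta)].

Definition reconciliation (G G' S : rtree) (phi rho : nat -> nat)
    (delta : nat -> option nat) : Prop :=
  [/\ extension G' G,
      (forall x, x \in rnodes G' -> rho x \in rnodes S),
      consistent S rho G',
      (forall x, x \in rleaves G -> rho x = phi x)
    &
      (forall x y, x \in Delta G' rho -> delta x = Some y ->
                   y \in Lambda G G' /\ rho x = rho y) /\
      (forall x1 x2, x1 \in Delta G' rho -> x2 \in Delta G' rho ->
                     delta x1 != None -> delta x1 = delta x2 -> x1 = x2)].

Definition cost (G G' : rtree) (rho : nat -> nat) (delta : nat -> option nat) : nat :=
  size [seq y <- Lambda G G' | y \notin Lambda' G G' rho delta]
  + size [seq x <- Delta G' rho | x \notin Delta' G' rho delta]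
  + size (Delta' G' rho delta).

Definition optimal (G G' S : rtree) (phi rho : nat -> nat)
    (delta : nat -> option nat) : Prop :=
  reconciliation G G' S phi rho delta /\
  forall G2 rho2 delta2, reconciliation G G2 S phi rho2 delta2 ->
    cost G G' rho delta <= cost G G2 rho2 delta2.

(** * Lost subtrees: maximal (rooted) subtrees of G' containing no node of G.
    [count_lost VG t] counts them inside t. *)
Fixpoint count_lost (VG : seq nat) (t : btree) : nat :=
  if all (fun v => v \notin VG) (bnodes t) then 1
  else match t with
       | BLeaf _ => 0
       | BNode _ l r => count_lost VG l + count_lost VG r
       end.

(** the root of G' belongs to V(G) for any extension G' of G, so lost
    subtrees lie below the unique child of root(G') *)
Definition n_lost (G G' : rtree) : nat := count_lost (rnodes G) (rchild G').

Definition loss_extension (G S : rtree) (phi : nat -> nat)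
    (G1 : rtree) (rho1 : nat -> nat) (delta1 : nat -> option nat)
    (G2 : rtree) (rho2 : nat -> nat) (delta2 : nat -> option nat) : Prop :=
  [/\ reconciliation G G1 S phi rho1 delta1,
      reconciliation G G2 S phi rho2 delta2,
      extension G2 G1,
      (forall x, x \in rnodes G1 -> rho2 x = rho1 x)
    & n_lost G G2 = n_lost G G1].

Definition completion (G S : rtree) (phi : nat -> nat)
    (G1 : rtree) (rho1 : nat -> nat) (delta1 : nat -> option nat)
    (G2 : rtree) (rho2 : nat -> nat) (delta2 : nat -> option nat) : Prop :=
  loss_extension G S phi G1 rho1 delta1 G2 rho2 delta2 /\
  forall G3 rho3 delta3,
    loss_extension G S phi G1 rho1 delta1 G3 rho3 delta3 ->
    cost G G2 rho2 delta2 <= cost G G3 rho3 delta3.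

Definition minimal (G G' S : rtree) (phi rho : nat -> nat)
    (delta : nat -> option nat) : Prop :=
  reconciliation G G' S phi rho delta /\
  ~ exists G'', [/\ extension G' G'', G' <> G'', extension G'' G & consistent S rho G''].

(* Main.v *)
Require Import Defs.
From mathcomp Require Import all_boot.
From mathcomp Require zify.
From Stdlib Require Import Lia.
Set Implicit Arguments. Unset Strict Implicit. Unset Printing Implicit Defensive.

Inductive isub (s : btree) : btree -> Prop :=
| isub_refl : isub s s
| isub_l v l r : isub s l -> isub s (BNode v l r)
| isub_r v l r : isub s r -> isub s (BNode v l r).

Lemma isub_trans a b c : isub a b -> isub b c -> isub a c.
Proof. move=> H1 H2; elim: H2 H1 => //= v l r _ IH H; [apply: isub_l|apply: isub_r]; exact: IH. Qed.

Lemma label_in t : blabel t \in bnodes t.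
Proof. by case: t => [v|v l r] /=; rewrite inE eqxx. Qed.

Lemma isub_nodes s t : isub s t -> {subset bnodes s <= bnodes t}.
Proof.
elim=> //= v l r _ IH x Hx; rewrite inE mem_cat (IH _ Hx) ?orbT //.
Qed.
Lemma isub_nodes' s t : isub s t -> {subset bnodes s <= bnodes t}.
Proof. exact: isub_nodes. Qed.

Lemma isub_leaves s t : isub s t -> {subset bleaves s <= bleaves t}.
Proof. elim=> //= v l r _ IH x Hx; rewrite mem_cat (IH _ Hx) ?orbT //. Qed.

Lemma isub_internal s t : isub s t -> {subset binternal s <= binternal t}.
Proof. elim=> //= v l r _ IH x Hx; rewrite inE mem_cat IH ?orbT //. Qed.

Lemma isub_internal_mem v l r t : isub (BNode v l r) t -> (v, blabel l, blabel r) \in binternal t.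
Proof. move=> H; apply: (isub_internal H); by rewrite /= inE eqxx. Qed.

Lemma internal_isub t v a b : (v, a, b) \in binternal t ->
  exists l r, [/\ isub (BNode v l r) t, blabel l = a & blabel r = b].
Proof.
elim: t => [w|w l IHl r IHr] //=; rewrite inE mem_cat.
case/orP=> [/eqP [-> -> ->]|/orP[H|H]]; first by exists l, r; split=> //; constructor.
- by case: (IHl H) => l' [r' [H1 H2 H3]]; exists l', r'; split=> //; apply: isub_l.
- by case: (IHr H) => l' [r' [H1 H2 H3]]; exists l', r'; split=> //; apply: isub_r.
Qed.

Lemma node_isub t a : a \in bnodes t -> exists u, isub u t /\ blabel u = a.
Proof.
elim: t => [w|w l IHl r IHr] /=; rewrite ?inE ?mem_cat.
- by move/eqP->; exists (BLeaf w); split=> //; constructor.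
- case/orP=> [/eqP->|/orP[H|H]]; first by exists (BNode w l r); split=> //; constructor.
  + by case: (IHl H) => u [H1 H2]; exists u; split=> //; apply: isub_l.
  + by case: (IHr H) => u [H1 H2]; exists u; split=> //; apply: isub_r.
Qed.

Lemma leaf_isub t a : a \in bleaves t -> isub (BLeaf a) t.
Proof.
elim: t => [w|w l IHl r IHr] /=; rewrite ?inE ?mem_cat.
- by move/eqP->; constructor.
- by case/orP=> H; [apply: isub_l; exact: IHl|apply: isub_r; exact: IHr].
Qed.

Lemma leaves_nodes t : {subset bleaves t <= bnodes t}.
Proof.
elim: t => [w|w l IHl r IHr] x /=; first by [].
rewrite mem_cat inE mem_cat.
by case/orP=> H; rewrite ?(IHl _ H) ?(IHr _ H) ?orbT.
Qed.

Lemma isub_uniq_nodes s t : isub s t -> uniq (bnodes t) -> uniq (bnodes s).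
Proof.
elim=> //= v l r _ IH /andP[_]; rewrite cat_uniq => /and3P[H1 _ H2]; exact: IH.
Qed.

Lemma isub_leaf_inv s v : isub s (BLeaf v) -> s = BLeaf v.
Proof. by move=> H; inversion H. Qed.

Lemma isub_node_inv s v l r : isub s (BNode v l r) ->
  [\/ s = BNode v l r, isub s l | isub s r].
Proof. by move=> H; inversion H; subst; [apply: Or31|apply: Or32|apply: Or33]. Qed.

Lemma isub_unique t t1 t2 : uniq (bnodes t) -> isub t1 t -> isub t2 t ->
  blabel t1 = blabel t2 -> t1 = t2.
Proof.
elim: t t1 t2 => [w|w l IHl r IHr] t1 t2 /=.
- by move=> _ /isub_leaf_inv -> /isub_leaf_inv ->.
- rewrite cat_uniq => /andP[Hw /and3P[Ul Dis Ur]] H1 H2 E.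
  move: Hw; rewrite mem_cat negb_or => /andP[Hwl Hwr].
  have Hl1 : isub t1 l -> blabel t1 \in bnodes l by move=> H; apply: (isub_nodes H); exact: label_in.
  have Hr1 : isub t1 r -> blabel t1 \in bnodes r by move=> H; apply: (isub_nodes H); exact: label_in.
  have Hl2 : isub t2 l -> blabel t2 \in bnodes l by move=> H; apply: (isub_nodes H); exact: label_in.
  have Hr2 : isub t2 r -> blabel t2 \in bnodes r by move=> H; apply: (isub_nodes H); exact: label_in.
  case/isub_node_inv: H1 => [E1|H1|H1]; case/isub_node_inv: H2 => [E2|H2|H2];
    rewrite ?E1 ?E2 //=.
  + by move: (Hl2 H2); rewrite -E E1 /= (negbTE Hwl).
  + by move: (Hr2 H2); rewrite -E E1 /= (negbTE Hwr).
  + by move: (Hl1 H1); rewrite E E2 /= (negbTE Hwl).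
  + exact: IHl.
  + by case/negP: Dis; apply/hasP; exists (blabel t2); [exact: Hr2|rewrite -E; exact: Hl1].
  + by move: (Hr1 H1); rewrite E E2 /= (negbTE Hwr).
  + by case/negP: Dis; apply/hasP; exists (blabel t2); [rewrite -E; exact: Hr1|exact: Hl2].
  + exact: IHr.
Qed.

Lemma internal_unique t v a b a' b' : uniq (bnodes t) ->
  (v, a, b) \in binternal t -> (v, a', b') \in binternal t -> a = a' /\ b = b'.
Proof.
move=> U /internal_isub [l [r [H1 <- <-]]] /internal_isub [l' [r' [H2 <- <-]]].
by have := isub_unique U H1 H2 erefl; case=> -> ->.
Qed.

Lemma internal_distinct t v a b : uniq (bnodes t) -> (v, a, b) \in binternal t ->
  [/\ v <> a, v <> b & a <> b].
Proof.
move=> U /internal_isub [l [r [H1 <- <-]]].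
have := isub_uniq_nodes H1 U => /=; rewrite cat_uniq => /andP[Hv /and3P[_ Dis _]].
move: Hv; rewrite mem_cat negb_or => /andP[Hl Hr].
split => E.
- by move: Hl; rewrite E label_in.
- by move: Hr; rewrite E label_in.
- by case/negP: Dis; apply/hasP; exists (blabel r); rewrite ?label_in // -E label_in.
Qed.

Lemma bext_nodes t g : bext t g -> {subset bnodes g <= bnodes t}.
Proof.
elim=> [v|v l' r' l r _ IH1 _ IH2|v l' r' g' _ IH|v l' r' g' _ IH] x /=;
  rewrite ?inE ?mem_cat //.
- by case/orP=> [->//|/orP[H|H]]; rewrite ?(IH1 _ H) ?(IH2 _ H) ?orbT.
- by move=> H; rewrite (IH _ H) ?orbT.
- by move=> H; rewrite (IH _ H) ?orbT.
Qed.

Lemma bext_refl t : bext t t.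
Proof. elim: t => [v|v l IHl r IHr]; by constructor. Qed.

Lemma heads_subseq t : subseq [seq tr.1.1 | tr <- binternal t] (bnodes t).
Proof.
elim: t => [w|w l IHl r IHr] //=.
rewrite eqxx map_cat; exact: cat_subseq.
Qed.

Lemma uniq_leaves t : uniq (bnodes t) -> uniq (bleaves t).
Proof.
elim: t => [w|w l IHl r IHr] //= /andP[_]; rewrite !cat_uniq => /and3P[Ul Dis Ur].
rewrite IHl // IHr //= andbT; apply/hasPn => x /leaves_nodes Hx.
apply/negP => /leaves_nodes H; by case/negP: Dis; apply/hasP; exists x.
Qed.

Lemma uniq_count_le1 (s : seq nat) v : uniq s -> count_mem v s <= 1.
Proof. by move=> U; rewrite count_uniq_mem //; case: (v \in s). Qed.

Lemma count_le1_uniq (s : seq nat) : (forall v, count_mem v s <= 1) -> uniq s.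
Proof.
elim: s => //= x s IH H; apply/andP; split.
- have := H x; rewrite /= eqxx add1n ltnS leqn0 => /eqP Hx; exact/count_memPn.
- apply: IH => v; have := H v; rewrite /=; case: (x == v) => /=; lia.
Qed.

Lemma count_mem_pos (s : seq nat) v : (v \in s) = (0 < count_mem v s).
Proof. by rewrite -has_count has_pred1. Qed.

Lemma ar4 (b A R S L U : nat) : A + S = L + U -> b + (A + R) + S = b + (L + R) + U.
Proof. lia. Qed.
Lemma ar5 (b L A S R U : nat) : A + S = R + U -> b + (L + A) + S = b + (L + R) + U.
Proof. lia. Qed.
Lemma ar6 (A R S L U : nat) : A + S = L + U -> (A + R) + S = (L + R) + U.
Proof. lia. Qed.
Lemma ar7 (L A S R U : nat) : A + S = R + U -> (L + A) + S = (L + R) + U.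
Proof. lia. Qed.

Lemma ar8 (b : bool) (x y : nat) : x <= y -> b + y <= 1 -> b + x <= 1.
Proof. case: b => /=; lia. Qed.

Fixpoint repl (t : btree) (a : nat) (u : btree) : btree :=
  if blabel t == a then u else
  match t with BLeaf _ => t | BNode v l r => BNode v (repl l a u) (repl r a u) end.

Lemma repl_notin t a u : a \notin bnodes t -> repl t a u = t.
Proof.
elim: t => [w|w l IHl r IHr] /=.
- by move=> H; case: eqP => // E; rewrite E inE eqxx in H.
- rewrite inE mem_cat negb_or => /andP[Hw /norP[Hl Hr]].
  by rewrite eq_sym (negbTE Hw) IHl // IHr.
Qed.

Lemma blabel_repl t a u : blabel (repl t a u) = if blabel t == a then blabel u else blabel t.
Proof. by case: t => [w|w l r] /=; case: eqP. Qed.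

Definition fixc (a b : nat) (tr : nat * nat * nat) : nat * nat * nat :=
  (tr.1.1, if tr.1.2 == a then b else tr.1.2, if tr.2 == a then b else tr.2).

Lemma repl_internal t a u tr : tr \in binternal (repl t a u) ->
  tr \in binternal u \/ exists2 tr', tr' \in binternal t & tr = fixc a (blabel u) tr' /\ tr'.1.1 != a.
Proof.
elim: t => [w|w l IHl r IHr] /=; first by case: (w == a) => //= H; left.
case Ew: (w == a); first by move=> H; left.
rewrite /= inE mem_cat => /orP[/eqP ->|/orP[H|H]].
- right; exists (w, blabel l, blabel r); first by rewrite inE eqxx.
  by rewrite /fixc /= !blabel_repl Ew.
- case: (IHl H) => [-> //|[tr' H1 H2]]; first by left.
  by right; exists tr' => //; rewrite inE mem_cat H1 orbT.
- case: (IHr H) => [-> //|[tr' H1 H2]]; first by left.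
  by right; exists tr' => //; rewrite inE mem_cat H1 !orbT.
Qed.

Lemma repl_internal_u s t u : isub s t ->
  {subset binternal u <= binternal (repl t (blabel s) u)}.
Proof.
elim=> [|v l r _ IH|v l r _ IH] tr Htr /=.
- by case: s Htr => [w|w l r] /=; rewrite eqxx.
- by case: (v == blabel s) => //; rewrite /= inE mem_cat (IH _ Htr) orbT.
- by case: (v == blabel s) => //; rewrite /= inE mem_cat (IH _ Htr) !orbT.
Qed.

Lemma repl_count s t u : uniq (bnodes t) -> isub s t -> forall v,
  count_mem v (bnodes (repl t (blabel s) u)) + count_mem v (bnodes s)
  = count_mem v (bnodes t) + count_mem v (bnodes u).
Proof.
elim: t => [w|w l IHl r IHr] /=.
- by move=> _ /isub_leaf_inv -> v /=; rewrite eqxx addnC.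
- move=> U H v; case/isub_node_inv: H => [->|H|H]; first by rewrite /= eqxx /= addnC.
  + have Hs := isub_nodes H (label_in s).
    move: U; rewrite cat_uniq => /andP[Hw /and3P[Ul Dis Ur]].
    have Hw' : w != blabel s by apply/eqP => E; move: Hw; rewrite mem_cat E Hs.
    have Hr : blabel s \notin bnodes r by apply/negP => Hr; case/negP: Dis; apply/hasP; exists (blabel s).
    have E2 : (w == blabel s) = false by apply/negbTE.
    rewrite E2 /= (repl_notin u Hr) !count_cat.
    exact: (ar4 _ _ (IHl Ul H v)) || exact: (ar6 _ (IHl Ul H v)).
  + have Hs := isub_nodes H (label_in s).
    move: U; rewrite cat_uniq => /andP[Hw /and3P[Ul Dis Ur]].
    have Hw' : w != blabel s by apply/eqP => E; move: Hw; rewrite mem_cat E Hs orbT.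
    have Hl : blabel s \notin bnodes l by apply/negP => Hl; case/negP: Dis; apply/hasP; exists (blabel s).
    have E2 : (w == blabel s) = false by apply/negbTE.
    rewrite E2 /= (repl_notin u Hl) !count_cat.
    exact: (ar5 _ _ (IHr Ur H v)) || exact: (ar7 _ (IHr Ur H v)).
Qed.

Lemma repl_countL s t u : uniq (bnodes t) -> isub s t -> forall v,
  count_mem v (bleaves (repl t (blabel s) u)) + count_mem v (bleaves s)
  = count_mem v (bleaves t) + count_mem v (bleaves u).
Proof.
elim: t => [w|w l IHl r IHr] /=.
- by move=> _ /isub_leaf_inv -> v /=; rewrite eqxx addnC.
- move=> U H v; case/isub_node_inv: H => [->|H|H]; first by rewrite /= eqxx /= addnC.
  + have Hs := isub_nodes H (label_in s).
    move: U; rewrite cat_uniq => /andP[Hw /and3P[Ul Dis Ur]].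
    have Hw' : w != blabel s by apply/eqP => E; move: Hw; rewrite mem_cat E Hs.
    have Hr : blabel s \notin bnodes r by apply/negP => Hr; case/negP: Dis; apply/hasP; exists (blabel s).
    have E2 : (w == blabel s) = false by apply/negbTE.
    rewrite E2 /= (repl_notin u Hr) !count_cat.
    exact: (ar4 _ _ (IHl Ul H v)) || exact: (ar6 _ (IHl Ul H v)).
  + have Hs := isub_nodes H (label_in s).
    move: U; rewrite cat_uniq => /andP[Hw /and3P[Ul Dis Ur]].
    have Hw' : w != blabel s by apply/eqP => E; move: Hw; rewrite mem_cat E Hs orbT.
    have Hl : blabel s \notin bnodes l by apply/negP => Hl; case/negP: Dis; apply/hasP; exists (blabel s).
    have E2 : (w == blabel s) = false by apply/negbTE.
    rewrite E2 /= (repl_notin u Hl) !count_cat.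
    exact: (ar5 _ _ (IHr Ur H v)) || exact: (ar7 _ (IHr Ur H v)).
Qed.

Lemma repl_bext t g a s u : bext t g ->
  (forall t0, isub t0 t -> blabel t0 = a -> t0 = s) ->
  (forall g', isub g' g -> bext s g' -> bext u g') ->
  bext (repl t a u) g.
Proof.
elim=> [v|v l' r' l r H1 IH1 H2 IH2|v l' r' g' H1 IH1|v l' r' g' H1 IH1] Hs Hu /=.
- case: eqP => [E|_]; last exact: bext_leaf.
  move: (Hs _ (isub_refl _) E) => Es; apply: Hu; [exact: isub_refl|rewrite -Es; exact: bext_leaf].
- case: eqP => [E|_].
    move: (Hs _ (isub_refl _) E) => Es; apply: Hu; [exact: isub_refl|rewrite -Es; exact: bext_node].
  apply: bext_node.
  + apply: IH1 => [t0 Ht0|g0 Hg0]; [apply: Hs; exact: isub_l|apply: Hu; exact: isub_l].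
  + apply: IH2 => [t0 Ht0|g0 Hg0]; [apply: Hs; exact: isub_r|apply: Hu; exact: isub_r].
- case: eqP => [E|_].
    move: (Hs _ (isub_refl _) E) => Es; apply: Hu; [exact: isub_refl|rewrite -Es; exact: bext_pruneR].
  apply: bext_pruneR; apply: IH1 => [t0 Ht0|g0 Hg0]; [apply: Hs; exact: isub_l|exact: Hu].
- case: eqP => [E|_].
    move: (Hs _ (isub_refl _) E) => Es; apply: Hu; [exact: isub_refl|rewrite -Es; exact: bext_pruneL].
  apply: bext_pruneL; apply: IH1 => [t0 Ht0|g0 Hg0]; [apply: Hs; exact: isub_r|exact: Hu].
Qed.

Definition sd (T : btree) (a b : nat) : Prop :=
  exists u, [/\ isub u T, blabel u = a & b \in bnodes u].
Definition schild (T : btree) (a b : nat) : Prop :=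
  exists c, (a, b, c) \in binternal T \/ (a, c, b) \in binternal T.

Lemma sd_in T a b : sd T a b -> b \in bnodes T.
Proof. by case=> u [H _ Hb]; exact: isub_nodes H _ Hb. Qed.

Lemma sd_refl T a : a \in bnodes T -> sd T a a.
Proof. by case/node_isub => u [H E]; exists u; split=> //; rewrite -E label_in. Qed.

Lemma sd_sub T u v : uniq (bnodes T) -> isub u T -> sd T (blabel u) v -> v \in bnodes u.
Proof. by move=> U H [u' [H' E Hv]]; rewrite -(isub_unique U H' H E). Qed.

Lemma sd_trans T a b c : uniq (bnodes T) -> sd T a b -> sd T b c -> sd T a c.
Proof.
move=> U [u [Hu Ea Hb]] [w [Hw Eb Hc]].
case: (node_isub Hb) => w' [Hw' Ew']; have Hw'T := isub_trans Hw' Hu.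
have := isub_unique U Hw'T Hw; rewrite Ew' Eb => /(_ erefl) Ew.
exists u; split=> //; apply: (isub_nodes Hw'); by rewrite Ew.
Qed.

Lemma schild_node T a b : schild T a b ->
  exists l r, isub (BNode a l r) T /\ (blabel l = b \/ blabel r = b).
Proof.
case=> c [] /internal_isub [l [r [H E1 E2]]]; exists l, r; split=> //; by [left|right].
Qed.

Lemma schild_sd T a b : schild T a b -> sd T a b.
Proof.
case/schild_node => l [r [H E]]; exists (BNode a l r); split=> //=.
by rewrite inE mem_cat; case: E => <-; rewrite label_in ?orbT.
Qed.

Lemma schild_nsd T a b : uniq (bnodes T) -> schild T a b -> ~ sd T b a.
Proof.
move=> U /schild_node [l [r [H E]]] Hs.
have := isub_uniq_nodes H U => /= /andP[Ha _]; move: Ha; rewrite mem_cat negb_or => /andP[Hl Hr].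
case: E => E.
- have Hl' : isub l T by apply: isub_trans H; apply: isub_l; exact: isub_refl.
  by move: Hs; rewrite -E => /(sd_sub U Hl') Hal; rewrite Hal in Hl.
- have Hr' : isub r T by apply: isub_trans H; apply: isub_r; exact: isub_refl.
  by move: Hs; rewrite -E => /(sd_sub U Hr') Har; rewrite Har in Hr.
Qed.

Lemma schild_neq T a b : uniq (bnodes T) -> schild T a b -> a <> b.
Proof.
move=> U H E; apply: (schild_nsd U H); rewrite -E; apply: sd_refl.
by case/schild_node: H => l [r [H _]]; apply: (isub_nodes H); rewrite /= inE eqxx.
Qed.

Lemma schild_in T a b : schild T a b -> a \in bnodes T /\ b \in bnodes T.
Proof.
move=> H; split; last exact: (sd_in (schild_sd H)).
by case/schild_node: H => l [r [H _]]; apply: (isub_nodes H); rewrite /= inE eqxx.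
Qed.

Lemma schild_disj T a b c v : uniq (bnodes T) -> schild T a b -> schild T a c -> b <> c ->
  sd T b v -> sd T c v -> False.
Proof.
move=> U /schild_node [l [r [H E]]] /schild_node [l' [r' [H' E']]] Nbc Hb Hc.
have := isub_unique U H H' erefl => [[El Er]]; subst l' r'.
have Hl' : isub l T by apply: isub_trans H; apply: isub_l; exact: isub_refl.
have Hr' : isub r T by apply: isub_trans H; apply: isub_r; exact: isub_refl.
have := isub_uniq_nodes H U => /= /andP[_]; rewrite cat_uniq => /and3P[_ Dis _].
have Hdis : v \in bnodes l -> v \in bnodes r -> False.
  by move=> H1 H2; case/negP: Dis; apply/hasP; exists v.
case: E => Eb; case: E' => Ec; subst b c.
- by [].
- by apply: Hdis; [exact: sd_sub U Hl' Hb|exact: sd_sub U Hr' Hc].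
- by apply: Hdis; [exact: sd_sub U Hl' Hc|exact: sd_sub U Hr' Hb].
- by [].
Qed.

Lemma schild_of T a b c : (a, b, c) \in binternal T -> schild T a b /\ schild T a c.
Proof. by move=> H; split; [exists c; left|exists b; right]. Qed.

Lemma count_split (T : Type) (P Q : pred T) (s : seq T) :
  count P s = count (fun x => P x && Q x) s + count (fun x => P x && ~~ Q x) s.
Proof. elim: s => //= x s ->; case: (P x); case: (Q x) => /=; lia. Qed.

Lemma count_sub (s1 s2 : seq nat) (P : pred nat) : uniq s1 -> uniq s2 -> {subset s2 <= s1} ->
  count P s1 = count P s2 + count (fun x => P x && (x \notin s2)) s1.
Proof.
move=> U1 U2 S; rewrite (count_split P (mem s2)); congr (_ + _).
have Hp : perm_eq [seq x <- s1 | x \in s2] s2.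
  apply: uniq_perm; [exact: filter_uniq|exact: U2|] => x; rewrite mem_filter.
  by apply/andP/idP => [[]//|H]; split=> //; exact: S.
rewrite -(permP Hp) count_filter; exact: eq_count.
Qed.

Definition restr (d : nat -> option nat) (L : seq nat) (x : nat) : option nat :=
  if d x is Some y then (if y \in L then Some y else None) else None.
Definition inL (d : nat -> option nat) (L : seq nat) (x : nat) : bool :=
  if d x is Some y then y \in L else false.

Lemma cost_strict (D1 D2 L1 L2 : seq nat) (d1 : nat -> option nat) :
  uniq D1 -> uniq D2 -> uniq L1 -> uniq L2 -> {subset D2 <= D1} -> {subset L2 <= L1} ->
  ((exists w, [/\ w \in D1, w \notin D2 & ~~ inL d1 L2 w]) \/
   (exists l, [/\ l \in L1, l \notin L2 & ~~ has (fun x => d1 x == Some l) D1])) ->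
  size D2 + count (fun y => ~~ has (fun x => restr d1 L2 x == Some y) D2) L2 <
  size D1 + count (fun y => ~~ has (fun x => d1 x == Some y) D1) L1.
Proof.
move=> UD1 UD2 UL1 UL2 SD SL W.
set u1 := (fun y => ~~ has (fun x => d1 x == Some y) D1).
set u2 := (fun y => ~~ has (fun x => restr d1 L2 x == Some y) D2).
have F1 : size D1 = size D2 + count (fun x => x \notin D2) D1.
  by have := count_sub predT UD1 UD2 SD; rewrite !count_predT => ->.
have F2 := count_sub u1 UL1 UL2 SL.
set H := [seq odflt 0 (d1 x) | x <- D1 & (x \notin D2) && inL d1 L2 x].
have F3 : count u2 L2 <= count u1 L2 + size H.
  rewrite (count_split u2 u1).
  have -> : count (fun x => u2 x && ~~ u1 x) L2 = size [seq y <- L2 | u2 y && ~~ u1 y] by rewrite size_filter.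
  have : size [seq y <- L2 | u2 y && ~~ u1 y] <= size H.
    apply: uniq_leq_size; first exact: filter_uniq.
    move=> y; rewrite mem_filter => /andP[/andP[Hu2 Hu1] Hy].
    move: Hu1; rewrite /u1 negbK => /hasP [x Hx /eqP Ex].
    apply/mapP; exists x; last by rewrite Ex.
    rewrite mem_filter Hx andbT /inL Ex Hy andbT.
    apply/negP => HxD2; move/hasP: Hu2; apply; exists x => //.
    by rewrite /restr Ex Hy.
  have : count (fun x => u2 x && u1 x) L2 <= count u1 L2.
    by apply: sub_count => y /andP[].
  lia.
have F4 := count_split (fun x => x \notin D2) (inL d1 L2) D1.
have HH : size H = count (fun x => (x \notin D2) && inL d1 L2 x) D1 by rewrite size_map size_filter.
have Pos : 0 < count (fun x => (x \notin D2) && ~~ inL d1 L2 x) D1 +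
               count (fun x => u1 x && (x \notin L2)) L1.
  case: W => [[w [Hw Hw2 Hw3]]|[l [Hl Hl2 Hl3]]].
  - suff : 0 < count (fun x => (x \notin D2) && ~~ inL d1 L2 x) D1 by lia.
    by rewrite -has_count; apply/hasP; exists w => //; rewrite Hw2.
  - suff : 0 < count (fun x => u1 x && (x \notin L2)) L1 by lia.
    by rewrite -has_count; apply/hasP; exists l => //; rewrite Hl2 andbT.
set a1 := count (fun x => (x \notin D2) && inL d1 L2 x) D1 in F4 HH Pos *.
set a2 := count (fun x => (x \notin D2) && ~~ inL d1 L2 x) D1 in F4 HH Pos *.
set a3 := count (fun x => x \notin D2) D1 in F1 F4 *.
set a4 := count (fun x => u1 x && (x \notin L2)) L1 in F2 Pos *.
set c11 := count u1 L1 in F2 *. set c12 := count u1 L2 in F2 F3 *.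
set c2 := count u2 L2 in F3 *.
clearbody a1 a2 a3 a4 H u1 u2 c11 c12 c2; lia.
Qed.

Lemma cost_eq G G' rho d : cost G G' rho d =
  size (Delta G' rho) + count (fun y => ~~ has (fun x => d x == Some y) (Delta G' rho)) (Lambda G G').
Proof.
rewrite /cost.
set D := Delta G' rho; set L := Lambda G G'.
have E1 : size [seq x <- D | x \notin Delta' G' rho d] + size (Delta' G' rho d) = size D.
  rewrite /Delta' !size_filter -/D -(count_predC (fun x => d x != None) D) addnC.
  congr (_ + _); apply: eq_in_count => x Hx /=; by rewrite mem_filter Hx andbT.
have E2 : size [seq y <- L | y \notin Lambda' G G' rho d] =
          count (fun y => ~~ has (fun x => d x == Some y) D) L.
  rewrite size_filter; apply: eq_in_count => y Hy /=; rewrite /Lambda' mem_filter Hy andbT.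
  congr (~~ _); apply/hasP/hasP => [[x]|[x Hx Ex]].
  - by rewrite /Delta' mem_filter => /andP[_ Hx] Ex; exists x.
  - exists x => //; rewrite /Delta' mem_filter Hx andbT; by move/eqP: Ex => ->.
rewrite -E1 E2; lia.
Qed.

Definition rtr (rho : nat -> nat) (tr : nat * nat * nat) := (rho tr.1.1, rho tr.1.2, rho tr.2).

Lemma uniq_Delta G' rho : uniq (bnodes (rchild G')) -> uniq (Delta G' rho).
Proof.
move=> U; apply: (subseq_uniq _ U); apply: subseq_trans (heads_subseq _).
by apply: map_subseq; exact: filter_subseq.
Qed.

Lemma uniq_Lambda G G' : uniq (bnodes (rchild G')) -> uniq (Lambda G G').
Proof. by move=> U; apply: filter_uniq; exact: uniq_leaves. Qed.

Lemma Delta_nodes G' rho x : x \in Delta G' rho -> x \in bnodes (rchild G').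
Proof.
move=> H; apply: (mem_subseq (heads_subseq _)); move: H.
by rewrite /Delta /rinternal => /mapP [tr]; rewrite mem_filter => /andP[_ Htr] ->; apply: map_f.
Qed.

Lemma DeltaP G' rho x : reflect (exists2 tr, tr \in rinternal G' & [/\ tr.1.1 = x, rho x = rho tr.1.2 & rho x = rho tr.2])
  (x \in Delta G' rho).
Proof.
apply: (iffP mapP) => [[tr]|[tr Htr [E1 E2 E3]]].
- rewrite mem_filter => /andP[/andP[/eqP E1 /eqP E2] Htr] ->; by exists tr.
- exists tr; last by rewrite E1.
  by rewrite mem_filter Htr andbT E1 -E2 -E3 !eqxx.
Qed.

Lemma wf_uniq_child (T : rtree) : wf T -> uniq (bnodes (rchild T)).
Proof. by rewrite /wf /rnodes /= => /andP[]. Qed.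

Lemma improve G S phi G' rho d1 (t2 : btree) :
  setting G S phi -> optimal G G' S phi rho d1 ->
  uniq (rroot G' :: bnodes t2) ->
  bext t2 (rchild G) ->
  {subset bnodes t2 <= bnodes (rchild G')} ->
  {subset bleaves t2 <= bleaves (rchild G')} ->
  (forall tr, tr \in binternal t2 ->
     (exists2 tr', tr' \in binternal (rchild G') & tr'.1.1 = tr.1.1 /\ rtr rho tr' = rtr rho tr) \/
     (exists sl sr, (rho tr.1.1, sl, sr) \in rinternal S /\ rho tr.1.2 = sl /\ rho tr.2 = sr)) ->
  (exists w, [/\ w \in Delta G' rho, w \notin Delta (RTree (rroot G') t2) rho &
                 ~~ inL d1 (Lambda G (RTree (rroot G') t2)) w]) \/
  (exists l, [/\ l \in Lambda G G', l \notin Lambda G (RTree (rroot G') t2) &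
                 ~~ has (fun x => d1 x == Some l) (Delta G' rho)]) ->
  False.
Proof.
move=> [_ wfS _ _] [[[wf1 root1 bext1] Rin [Croot Ctr] Phi [Dl Dinj]] Opt] U2 B2 Sn Sl Tr W.
set G2 := RTree (rroot G') t2.
have US : uniq (bnodes (rchild S)) := wf_uniq_child wfS.
have SD : {subset Delta G2 rho <= Delta G' rho}.
  move=> x /DeltaP [tr Htr [E1 E2 E3]]; apply/DeltaP.
  case: (Tr _ Htr) => [[tr' Htr' [H1 H2]]|[sl [sr [H1 [H2 H3]]]]].
  - exists tr' => //; move: H2; rewrite /rtr; case=> F1 F2 F3; split.
    + by rewrite H1 E1.
    + by rewrite F2 E2.
    + by rewrite F3 E3.
  - exfalso; move: H1; rewrite -H2 E1 -E2 => /(internal_distinct US) [] //.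
have SL : {subset Lambda G G2 <= Lambda G G'}.
  by move=> y; rewrite !mem_filter => /andP[-> /Sl ->].
set d2 := restr d1 (Lambda G G2).
have R2 : reconciliation G G2 S phi rho d2.
  split.
  - by split; [exact: U2|rewrite /= root1|exact: B2].
  - move=> x; rewrite /rnodes /= inE => /orP[/eqP ->|H]; apply: Rin; rewrite /rnodes inE ?eqxx //.
    by rewrite (Sn _ H) orbT.
  - split=> // x xl xr Htr; case: (Tr _ Htr) => [[tr' Htr' [H1 H2]]|[sl [sr [H1 [H2 H3]]]]].
    + move: tr' Htr' H1 H2 => [[x' xl'] xr'] Htr' /= Ex [_ <- <-]; subst x'; exact: Ctr Htr'.
    + by right; exists sl, sr.
  - exact: Phi.
  - split.
    + move=> x y Hx; rewrite /d2 /restr; case E: (d1 x) => [z|] //.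
      case: ifP => // Hz [<-]; split=> //; exact: (proj2 (Dl _ _ (SD _ Hx) E)).
    + move=> x1 x2 H1 H2; rewrite /d2 /restr.
      case E1: (d1 x1) => [z1|] //; case: ifP => // Hz1 _.
      case E2: (d1 x2) => [z2|] //.
      case: ifP => // Hz2 [E]; subst z2.
      apply: (Dinj _ _ (SD _ H1) (SD _ H2)); by rewrite ?E1 ?E2.
have := Opt _ _ _ R2; rewrite !cost_eq.
have Hlt := @cost_strict (Delta G' rho) (Delta G2 rho) (Lambda G G') (Lambda G G2) d1
  (uniq_Delta _ (wf_uniq_child wf1)) (uniq_Delta (G':=G2) rho (wf_uniq_child (T:=G2) U2))
  (@uniq_Lambda G G' (wf_uniq_child wf1)) (@uniq_Lambda G G2 (wf_uniq_child (T:=G2) U2)) SD SL W.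
rewrite leqNgt; apply/negP; apply/negPn; exact: Hlt.
Qed.

Definition Gfree (G : rtree) (U : btree) := forall v, v \in bnodes U -> v \notin rnodes G.

Lemma isub_leaf_mem a t : isub (BLeaf a) t -> a \in bleaves t.
Proof. elim=> [|v l r _ IH|v l r _ IH] /=; rewrite ?inE ?mem_cat ?IH ?orbT //. Qed.

Lemma bext_gfree G U g' : bext U g' -> isub g' (rchild G) -> Gfree G U -> False.
Proof.
move=> B H F; have := F _ (bext_nodes B (label_in g')).
by rewrite /rnodes inE (isub_nodes H (label_in g')) orbT.
Qed.

Lemma bext_node_inv x a b g : bext (BNode x a b) g ->
  [\/ exists l r, [/\ g = BNode x l r, bext a l & bext b r], bext a g | bext b g].
Proof.
move=> H; inversion H; subst.
- by apply: Or31; exists l, r.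
- by apply: Or32.
- by apply: Or33.
Qed.

Lemma bext_leaf_inv v g : bext (BLeaf v) g -> g = BLeaf v.
Proof. by move=> H; inversion H. Qed.

Lemma bext_drop_r G x a b g' : bext (BNode x a b) g' -> isub g' (rchild G) -> Gfree G b -> bext a g'.
Proof.
move=> B H F; case/bext_node_inv: B => [[l [r [E _ Br]]]|//|Bb].
- exfalso; apply: (bext_gfree Br _ F); apply: isub_trans H; rewrite E; apply: isub_r; exact: isub_refl.
- exfalso; exact: bext_gfree Bb H F.
Qed.

Lemma bext_drop_l G x a b g' : bext (BNode x a b) g' -> isub g' (rchild G) -> Gfree G a -> bext b g'.
Proof.
move=> B H F; case/bext_node_inv: B => [[l [r [E Bl _]]]|Ba|//].
- exfalso; apply: (bext_gfree Bl _ F); apply: isub_trans H; rewrite E; apply: isub_l; exact: isub_refl.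
- exfalso; exact: bext_gfree Ba H F.
Qed.

Definition eqv (rho : nat -> nat) (t : btree) (tr : nat * nat * nat) :=
  exists2 tr', tr' \in binternal t & tr'.1.1 = tr.1.1 /\ rtr rho tr' = rtr rho tr.

Definition striple (S : rtree) (rho : nat -> nat) (tr : nat * nat * nat) :=
  exists sl sr, (rho tr.1.1, sl, sr) \in rinternal S /\ rho tr.1.2 = sl /\ rho tr.2 = sr.

Lemma eqv_refl rho t tr : tr \in binternal t -> eqv rho t tr.
Proof. by move=> H; exists tr. Qed.

Lemma eqv_trans rho t t1 tr : eqv rho t1 tr -> (forall tr1, tr1 \in binternal t1 -> eqv rho t tr1) -> eqv rho t tr.
Proof.
case=> tr1 H1 [E1 E2] H; case: (H _ H1) => tr' H' [E1' E2']; exists tr' => //.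
by rewrite E1' E1 E2' E2.
Qed.

Lemma fixc_eqv rho t a b tr : rho b = rho a -> tr \in binternal t -> eqv rho t (fixc a b tr).
Proof.
move=> E H; exists tr => //; split => //.
rewrite /rtr /fixc /=; congr (_, _, _); by case: eqP => // ->.
Qed.

Lemma fixc_id a tr : fixc a a tr = tr.
Proof. by case: tr => [[x y] z]; rewrite /fixc /=; do 2 case: eqP => [->|_] //. Qed.

Definition cons_tr (S : rtree) (rho : nat -> nat) (tr : nat * nat * nat) :=
  (rho tr.1.1 = rho tr.1.2 /\ rho tr.1.1 = rho tr.2) \/ striple S rho tr.

Lemma mono S rho a : uniq (bnodes (rchild S)) ->
  (forall tr, tr \in binternal a -> cons_tr S rho tr) ->
  rho (blabel a) \in bnodes (rchild S) ->
  forall v, v \in bnodes a -> sd (rchild S) (rho (blabel a)) (rho v).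
Proof.
move=> US; elim: a => [w|w l IHl r IHr] /= C Hin v.
- by rewrite inE => /eqP ->; exact: sd_refl.
- have Cl : forall tr, tr \in binternal l -> cons_tr S rho tr.
    by move=> tr H; apply: C; rewrite inE mem_cat H orbT.
  have Cr : forall tr, tr \in binternal r -> cons_tr S rho tr.
    by move=> tr H; apply: C; rewrite inE mem_cat H !orbT.
  have [Hl Hr] : sd (rchild S) (rho w) (rho (blabel l)) /\ sd (rchild S) (rho w) (rho (blabel r)).
    have Cw := C (w, blabel l, blabel r); rewrite inE eqxx /= in Cw.
    case: (Cw erefl) => [[<- <-]|[sl [sr [H [E1 E2]]]]].
    + by split; exact: sd_refl.
    + by subst sl sr; case: (schild_of H) => H1 H2; split; exact: schild_sd.
  rewrite inE mem_cat => /orP[/eqP ->|/orP[H|H]]; first exact: sd_refl.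
  + apply: (sd_trans US Hl); apply: IHl => //; exact: sd_in Hl.
  + apply: (sd_trans US Hr); apply: IHr => //; exact: sd_in Hr.
Qed.

Lemma notin_Delta r t rho x : x \notin bnodes t -> x \notin Delta (RTree r t) rho.
Proof. by apply: contra => /Delta_nodes. Qed.

Lemma notin_Lambda G r t l : l \notin bleaves t -> l \notin Lambda G (RTree r t).
Proof. by apply: contra; rewrite mem_filter => /andP[]. Qed.

Definition cm (v : nat) (s : seq nat) : nat := count_mem v s.
Lemma cm_cat v a b : cm v (a ++ b) = cm v a + cm v b.
Proof. exact: count_cat. Qed.
Lemma cm_cons v x s : cm v (x :: s) = (x == v) + cm v s.
Proof. by []. Qed.
Lemma cm_nil v : cm v [::] = 0.
Proof. by []. Qed.
Lemma cm_uniq v s : uniq s -> cm v s <= 1.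
Proof. exact: uniq_count_le1. Qed.
Lemma cm_pos v s : (v \in s) = (0 < cm v s).
Proof. exact: count_mem_pos. Qed.
Lemma cm_le1_uniq s : (forall v, cm v s <= 1) -> uniq s.
Proof. exact: count_le1_uniq. Qed.
Lemma repl_cm s t u v : uniq (bnodes t) -> isub s t ->
  cm v (bnodes (repl t (blabel s) u)) + cm v (bnodes s) = cm v (bnodes t) + cm v (bnodes u).
Proof. by move=> U H; exact: repl_count. Qed.
Lemma repl_cmL s t u v : uniq (bnodes t) -> isub s t ->
  cm v (bleaves (repl t (blabel s) u)) + cm v (bleaves s) = cm v (bleaves t) + cm v (bleaves u).
Proof. by move=> U H; exact: repl_countL. Qed.
Lemma repl_cm_leaf l t u v : uniq (bnodes t) -> isub (BLeaf l) t ->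
  cm v (bnodes (repl t l u)) + (l == v) = cm v (bnodes t) + cm v (bnodes u).
Proof. move=> U H; have := repl_cm u v U H; rewrite /= /cm /= addn0; exact. Qed.
Lemma repl_cmL_leaf l t u v : uniq (bnodes t) -> isub (BLeaf l) t ->
  cm v (bleaves (repl t l u)) + (l == v) = cm v (bleaves t) + cm v (bleaves u).
Proof. move=> U H; have := repl_cmL u v U H; rewrite /= /cm /= addn0; exact. Qed.
Lemma cm_notin v s : v \notin s -> cm v s = 0.
Proof. by rewrite cm_pos; case: (cm v s). Qed.
Lemma cm_in v s : v \in s -> 0 < cm v s.
Proof. by rewrite cm_pos. Qed.
Lemma cm_eqn (x v : nat) : x <> v -> (x == v) = false.
Proof. by move/eqP/negbTE. Qed.
Lemma cm_leaves_nodes v t : cm v (bleaves t) <= cm v (bnodes t).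
Proof.
elim: t => [w|w l IHl r IHr]; first exact: leqnn.
have -> : bleaves (BNode w l r) = bleaves l ++ bleaves r by [].
have -> : bnodes (BNode w l r) = w :: bnodes l ++ bnodes r by [].
rewrite cm_cons !cm_cat; lia.
Qed.
Lemma uniq_nodes_cm v t : uniq (bnodes t) -> cm v (bnodes t) <= 1.
Proof. exact: cm_uniq. Qed.

Lemma improve_counts G S phi G' rho d1 (t2 : btree) :
  setting G S phi -> optimal G G' S phi rho d1 ->
  (forall v, cm v (bnodes t2) <= cm v (bnodes (rchild G'))) ->
  (forall v, cm v (bleaves t2) <= cm v (bleaves (rchild G'))) ->
  bext t2 (rchild G) ->
  (forall tr, tr \in binternal t2 -> eqv rho (rchild G') tr \/ striple S rho tr) ->
  (exists w, [/\ w \in Delta G' rho, w \notin Delta (RTree (rroot G') t2) rho &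
                 ~~ inL d1 (Lambda G (RTree (rroot G') t2)) w]) \/
  (exists l, [/\ l \in Lambda G G', l \notin Lambda G (RTree (rroot G') t2) &
                 ~~ has (fun x => d1 x == Some l) (Delta G' rho)]) ->
  False.
Proof.
move=> HS HO Cn Cl B Tr W.
have wf1 : wf G' by case: HO => [[[]]].
apply: (improve HS HO _ B _ _ Tr W).
- apply: count_le1_uniq => v /=; have := uniq_count_le1 v wf1; rewrite /rnodes /=.
  exact: ar8 (Cn v).
- by move=> v; rewrite !count_mem_pos => H; apply: leq_trans H (Cn v).
- by move=> v; rewrite !count_mem_pos => H; apply: leq_trans H (Cl v).
Qed.


Ltac slia := repeat match goal with H : _ |- _ => clear H end; lia.

Lemma nodes_BNode x a b : bnodes (BNode x a b) = x :: bnodes a ++ bnodes b.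
Proof. by []. Qed.
Lemma leaves_BNode x a b : bleaves (BNode x a b) = bleaves a ++ bleaves b.
Proof. by []. Qed.

Lemma shape_cm s x U z : s = BNode x U z \/ s = BNode x z U ->
  (forall v, cm v (bnodes s) = (x == v) + cm v (bnodes U) + cm v (bnodes z)) /\
  (forall v, cm v (bleaves s) = cm v (bleaves U) + cm v (bleaves z)).
Proof. case=> ->; split=> v; rewrite ?nodes_BNode ?leaves_BNode ?cm_cons !cm_cat; slia. Qed.

Lemma caseA G S phi G' rho d1 s x U z :
  setting G S phi -> optimal G G' S phi rho d1 ->
  isub s (rchild G') -> s = BNode x U z \/ s = BNode x z U ->
  Gfree G U -> rho (blabel U) = rho x -> rho (blabel z) = rho x -> False.
Proof.
move=> HS HO Hs Es FU EU Ez.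
have HO' := HO; case: HO' => [[[wf1 root1 bext1] Rin [Croot Ctr] Phi [Dl Dinj]] Opt].
have Ut : uniq (bnodes (rchild G')) := wf_uniq_child wf1.
have Lx : blabel s = x by case: Es => ->.
have [Cs CsL] := shape_cm Es.
have HsU : isub U s by case: Es => ->; [apply: isub_l|apply: isub_r]; exact: isub_refl.
have Hsz : isub z s by case: Es => ->; [apply: isub_r|apply: isub_l]; exact: isub_refl.
have HxD : x \in Delta G' rho.
  apply/DeltaP; case: Es => Es; rewrite Es in Hs.
  - by exists (x, blabel U, blabel z); [exact: isub_internal_mem Hs|split; rewrite /= ?EU ?Ez].
  - by exists (x, blabel z, blabel U); [exact: isub_internal_mem Hs|split; rewrite /= ?EU ?Ez].
set t1 := repl (rchild G') x z.
have Ux : forall v, cm v (bnodes (rchild G')) <= 1 := fun v => cm_uniq v Ut.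
have C1 : forall v, cm v (bnodes t1) + (x == v) + cm v (bnodes U) = cm v (bnodes (rchild G')).
  move=> v; have := repl_cm z v Ut Hs; rewrite Lx Cs -/t1; slia.
have L1 : forall v, cm v (bleaves t1) + cm v (bleaves U) = cm v (bleaves (rchild G')).
  move=> v; have := repl_cmL z v Ut Hs; rewrite Lx CsL -/t1; slia.
have Ut1 : uniq (bnodes t1) by apply: cm_le1_uniq => v; have := C1 v; have := Ux v; slia.
have B1 : bext t1 (rchild G).
  apply: repl_bext; first exact: bext1.
  - move=> t0 H0 E0; apply: (isub_unique Ut H0 Hs); by rewrite E0 Lx.
  - move=> g' Hg' Bs; case: Es Bs => -> Bs; [exact: bext_drop_l Bs Hg' FU|exact: bext_drop_r Bs Hg' FU].
have T1 : forall tr, tr \in binternal t1 -> eqv rho (rchild G') tr.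
  move=> tr /repl_internal [H|[tr' H1 [-> _]]].
  - apply: eqv_refl; exact: isub_internal (isub_trans Hsz Hs) _ H.
  - apply: fixc_eqv H1; by rewrite Ez.
have xt1 : cm x (bnodes t1) = 0 /\ cm x (bnodes U) = 0.
  by have := C1 x; have := Ux x; rewrite eqxx /=; slia.
have Removal : (forall l, d1 x = Some l -> l \notin bleaves t1) -> False.
  move=> Hd; apply: (improve_counts (t2 := t1) HS HO).
  - by move=> v; have := C1 v; slia.
  - by move=> v; have := L1 v; slia.
  - exact: B1.
  - by move=> tr H; left; exact: T1.
  - left; exists x; split=> //.
    + by apply: notin_Delta; rewrite cm_pos; case: xt1 => ->.
    + rewrite /inL; case E: (d1 x) => [l|] //; apply/negP => /(mem_subseq (filter_subseq _ _)).
      by apply/negP; exact: Hd.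
case Ed: (d1 x) => [l|]; last by apply: Removal => l; rewrite Ed.
have [Hl Erl] := Dl _ _ HxD Ed.
move: (Hl); rewrite mem_filter /rleaves => /andP[HlG Hlt].
case: (boolP (l \in bnodes U)) => HlU.
  apply: Removal => l'; rewrite Ed => -[<-]; apply/negP => /leaves_nodes.
  rewrite cm_pos; have := C1 l; have := Ux l; have := cm_in HlU; slia.
have lt1 : l \in bleaves t1.
  rewrite cm_pos; have := L1 l; have := cm_in Hlt.
  have := cm_leaves_nodes l U; rewrite (cm_notin HlU); slia.
have Hsl := leaf_isub lt1.
set t2 := repl t1 l U.
have C2 : forall v, cm v (bnodes t2) + (l == v) = cm v (bnodes t1) + cm v (bnodes U).
  by move=> v; exact: repl_cm_leaf.
have L2 : forall v, cm v (bleaves t2) + (l == v) = cm v (bleaves t1) + cm v (bleaves U).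
  by move=> v; exact: repl_cmL_leaf.
apply: (improve_counts (t2 := t2) HS HO).
- by move=> v; have := C2 v; have := C1 v; slia.
- by move=> v; have := L2 v; have := L1 v; slia.
- apply: repl_bext; first exact: B1.
  + move=> t0 H0 E0; apply: (isub_unique Ut1 H0 Hsl); by rewrite E0.
  + move=> g' Hg' /bext_leaf_inv E; subst g'.
    by move: HlG; rewrite (isub_leaf_mem Hg').
- move=> tr /repl_internal [H|[tr' H1 [-> _]]]; left.
  + apply: eqv_refl; exact: isub_internal (isub_trans HsU Hs) _ H.
  + apply: (eqv_trans (fixc_eqv _ H1)) => //; by rewrite EU Erl.
- left; exists x; split=> //.
  + apply: notin_Delta; rewrite cm_pos; have := C2 x; case: xt1 => -> ->; slia.
  + rewrite /inL Ed; apply: notin_Lambda; rewrite cm_pos.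
    have := L2 l; have := L1 l; have := cm_leaves_nodes l (rchild G'); have := Ux l; rewrite eqxx /=; slia.
Qed.

Lemma leaf_exists t : exists l, l \in bleaves t.
Proof.
elim: t => [w|w l [x Hx] r _]; first by exists w; rewrite inE.
by exists x; rewrite leaves_BNode mem_cat Hx.
Qed.

Lemma cons_sub S rho G' a : consistent S rho G' -> isub a (rchild G') ->
  forall tr, tr \in binternal a -> cons_tr S rho tr.
Proof.
move=> [_ C] H [[x xl] xr] Htr; rewrite /cons_tr /striple /=.
have := C x xl xr (isub_internal H Htr); by [].
Qed.

Lemma rleaves_rnodes G v : v \in rleaves G -> v \in rnodes G.
Proof. by move=> H; rewrite /rnodes inE (leaves_nodes H) orbT. Qed.

Lemma caseC G S phi G' rho d1 x U z :
  setting G S phi -> optimal G G' S phi rho d1 ->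
  (rchild G' = BNode x U z /\ (rho x, rho (blabel U), rho (blabel z)) \in rinternal S) \/
  (rchild G' = BNode x z U /\ (rho x, rho (blabel z), rho (blabel U)) \in rinternal S) ->
  Gfree G U -> False.
Proof.
move=> HS HO Es FU.
have HO' := HO; case: HO' => [[[wf1 root1 bext1] Rin Cons Phi [Dl Dinj]] Opt].
have wfS : wf S by case: HS.
have US := wf_uniq_child wfS.
have Ut : uniq (bnodes (rchild G')) := wf_uniq_child wf1.
have Ux : forall v, cm v (bnodes (rchild G')) <= 1 := fun v => cm_uniq v Ut.
have Es' : rchild G' = BNode x U z \/ rchild G' = BNode x z U by case: Es => [[-> _]|[-> _]]; [left|right].
have [Cs CsL] := shape_cm Es'.
have HsU : isub U (rchild G') by case: Es' => ->; [apply: isub_l|apply: isub_r]; exact: isub_refl.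
have Hsz : isub z (rchild G') by case: Es' => ->; [apply: isub_r|apply: isub_l]; exact: isub_refl.
have [chU chz nUz [nxz nxU]] : [/\ schild (rchild S) (rho x) (rho (blabel U)),
    schild (rchild S) (rho x) (rho (blabel z)), rho (blabel U) <> rho (blabel z) &
    rho x <> rho (blabel z) /\ rho x <> rho (blabel U)].
  case: Es => [[_ H]|[_ H]]; have [H1 H2] := schild_of H;
    have [D1 D2 D3] := internal_distinct US H.
  - by split.
  - by split=> // E; apply: D3.
have HxD : x \notin Delta G' rho.
  apply/negP => /DeltaP [[[a b] c] Htr /= [Ea E2 E3]]; subst a.
  case: Es' => Es'; move: Htr; rewrite /rinternal Es' => Htr.
  - have Hown : (x, blabel U, blabel z) \in binternal (BNode x U z) by rewrite inE eqxx.
    rewrite Es' in Ut; have [Eb Ec] := internal_unique Ut Htr Hown; subst b c; exact: nxU.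
  - have Hown : (x, blabel z, blabel U) \in binternal (BNode x z U) by rewrite inE eqxx.
    rewrite Es' in Ut; have [Eb Ec] := internal_unique Ut Htr Hown; subst b c; exact: nxz.
have C2 : forall v, cm v (bnodes z) <= cm v (bnodes (rchild G')) by move=> v; rewrite Cs; slia.
have L2 : forall v, cm v (bleaves z) <= cm v (bleaves (rchild G')) by move=> v; rewrite CsL; slia.
have Bz : bext z (rchild G).
  move: bext1; case: Es' => -> B; [exact: bext_drop_l B (isub_refl _) FU|exact: bext_drop_r B (isub_refl _) FU].
have [lU HlU] := leaf_exists U.
have HlUn := leaves_nodes HlU.
have lUt : lU \in bleaves (rchild G') := isub_leaves HsU HlU.
have lUz : lU \notin bnodes z.
  by rewrite cm_pos; have := Cs lU; have := Ux lU; have := cm_in HlUn; slia.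
have lUL : lU \in Lambda G G'.
  rewrite mem_filter /rleaves lUt andbT; apply: contra (FU _ HlUn); exact: rleaves_rnodes.
apply: (improve_counts (t2 := z) HS HO C2 L2 Bz).
  by move=> tr H; left; apply: eqv_refl; exact: (isub_internal Hsz H).
case: (boolP (has (fun y => d1 y == Some lU) (Delta G' rho))) => Hh; last first.
  right; exists lU; split => //; apply: notin_Lambda; apply: contra lUz; exact: leaves_nodes.
case/hasP: Hh => y Hy /eqP Ey.
have [_ Ery] := Dl _ _ Hy Ey.
have Hyt := Delta_nodes Hy.
case: (boolP (y \in bnodes U)) => HyU.
  left; exists y; split => //.
  + apply: notin_Delta; rewrite cm_pos; have := Cs y; have := Ux y; have := cm_in HyU; slia.
  + rewrite /inL Ey; apply: notin_Lambda; apply: contra lUz; exact: leaves_nodes.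
case: (boolP (y \in bnodes z)) => Hyz.
  exfalso.
  have Mz := mono US (cons_sub Cons Hsz) (proj2 (schild_in chz)) Hyz.
  have MU := mono US (cons_sub Cons HsU) (proj2 (schild_in chU)) HlUn.
  rewrite Ery in Mz; exact: (schild_disj US chU chz nUz MU Mz).
exfalso; move: Hyt; rewrite cm_pos Cs (cm_notin HyU) (cm_notin Hyz).
case: eqP => [Exy _|]; last by rewrite /=.
by rewrite Exy Hy in HxD.
Qed.

Lemma heads_in t tr : tr \in binternal t -> tr.1.1 \in bnodes t.
Proof. by move=> H; apply: (mem_subseq (heads_subseq t)); apply: map_f. Qed.

Lemma caseD G S phi G' rho d1 p x a b y c d :
  setting G S phi -> optimal G G' S phi rho d1 ->
  isub (BNode p (BNode x a b) (BNode y c d)) (rchild G') ->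
  Gfree G b -> Gfree G c -> rho x = rho p -> rho y = rho p ->
  (rho p, rho (blabel a), rho (blabel b)) \in rinternal S ->
  rho (blabel c) = rho (blabel a) -> rho (blabel d) = rho (blabel b) -> False.
Proof.
move=> HS HO Hs Fb Fc Ex Ey HpS Eca Edb.
have HO' := HO; case: HO' => [[[wf1 root1 bext1] Rin Cons Phi [Dl Dinj]] Opt].
have wfS : wf S by case: HS.
have US := wf_uniq_child wfS.
have [Dpa Dpb Dab] := internal_distinct US HpS.
set t := rchild G' in Hs bext1 *.
have Ut : uniq (bnodes t) := wf_uniq_child wf1.
have Ux : forall v, cm v (bnodes t) <= 1 := fun v => cm_uniq v Ut.
set s := BNode p (BNode x a b) (BNode y c d) in Hs *.
set u := BNode p a d.
have sub1 : forall q, isub q (BNode x a b) -> isub q t.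
  move=> q H; apply: isub_trans Hs; exact: isub_l.
have sub2 : forall q, isub q (BNode y c d) -> isub q t.
  move=> q H; apply: isub_trans Hs; exact: isub_r.
have Ha : isub a t by apply: sub1; apply: isub_l; exact: isub_refl.
have Hb : isub b t by apply: sub1; apply: isub_r; exact: isub_refl.
have Hc : isub c t by apply: sub2; apply: isub_l; exact: isub_refl.
have Hd : isub d t by apply: sub2; apply: isub_r; exact: isub_refl.
have Cs : forall v, cm v (bnodes s) = (p == v) + (x == v) + cm v (bnodes a) + cm v (bnodes b)
    + (y == v) + cm v (bnodes c) + cm v (bnodes d).
  by move=> v; rewrite /s !nodes_BNode !cm_cons !cm_cat !cm_cons !cm_cat; slia.
have CsL : forall v, cm v (bleaves s) = cm v (bleaves a) + cm v (bleaves b) + cm v (bleaves c) + cm v (bleaves d).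
  by move=> v; rewrite /s !leaves_BNode !cm_cat; slia.
have Cu : forall v, cm v (bnodes u) = (p == v) + cm v (bnodes a) + cm v (bnodes d).
  by move=> v; rewrite /u !nodes_BNode !cm_cons !cm_cat; slia.
have CuL : forall v, cm v (bleaves u) = cm v (bleaves a) + cm v (bleaves d).
  by move=> v; rewrite /u !leaves_BNode !cm_cat.
have HpD : p \in Delta G' rho.
  apply/DeltaP; exists (p, x, y); first exact: (isub_internal_mem Hs).
  by split; rewrite /= ?Ex ?Ey.
set t1 := repl t p u.
have C1 : forall v, cm v (bnodes t1) + (x == v) + (y == v) + cm v (bnodes b) + cm v (bnodes c)
    = cm v (bnodes t).
  move=> v; have := repl_cm u v Ut Hs; rewrite Cs Cu -/t1; slia.
have L1 : forall v, cm v (bleaves t1) + cm v (bleaves b) + cm v (bleaves c) = cm v (bleaves t).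
  move=> v; have := repl_cmL u v Ut Hs; rewrite CsL CuL -/t1; slia.
have Ut1 : uniq (bnodes t1) by apply: cm_le1_uniq => v; have := C1 v; have := Ux v; slia.
have pa : p \notin bnodes a /\ p \notin bnodes d.
  have Us := isub_uniq_nodes Hs Ut.
  by rewrite !cm_pos -!leqNgt; have := Cs p; have := cm_uniq p Us; rewrite eqxx /=; slia.
have pbc : p \notin bnodes c /\ p \notin bnodes b.
  have Us := isub_uniq_nodes Hs Ut.
  by rewrite !cm_pos -!leqNgt; have := Cs p; have := cm_uniq p Us; rewrite eqxx /=; slia.
have B1 : bext t1 (rchild G).
  apply: repl_bext; first exact: bext1.
  - by move=> t0 H0 E0; apply: (isub_unique Ut H0 Hs); rewrite E0.
  - move=> g' Hg' Bs; case/bext_node_inv: Bs => [[l [r [E Bl Br]]]|Bl|Br].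
    + subst g'; apply: bext_node.
      * apply: (bext_drop_r Bl _ Fb); apply: isub_trans Hg'; apply: isub_l; exact: isub_refl.
      * apply: (bext_drop_l Br _ Fc); apply: isub_trans Hg'; apply: isub_r; exact: isub_refl.
    + apply: bext_pruneR; exact: (bext_drop_r Bl Hg' Fb).
    + apply: bext_pruneL; exact: (bext_drop_l Br Hg' Fc).
have T1 : forall tr, tr \in binternal t1 -> eqv rho t tr \/ striple S rho tr.
  move=> tr /repl_internal [|[tr' H1 [-> _]]].
  - rewrite /u /= inE mem_cat => /orP[/eqP ->|/orP[H|H]].
    + by right; exists (rho (blabel a)), (rho (blabel b)); rewrite /= Edb.
    + by left; apply: eqv_refl; exact: (isub_internal Ha H).
    + by left; apply: eqv_refl; exact: (isub_internal Hd H).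
  - by left; rewrite /u /= fixc_id; exact: eqv_refl.
have P1 : forall tr, tr \in binternal t1 -> tr.1.1 = p -> tr = (p, blabel a, blabel d).
  move=> tr /repl_internal [|[tr' H1 [E Hne]]].
  - rewrite /u /= inE mem_cat => /orP[/eqP ->//|/orP[H|H]] Ep.
    + by case: pa; rewrite -Ep (heads_in H).
    + by case: pa; rewrite -Ep (heads_in H).
  - by rewrite E /fixc /= => Ep; rewrite Ep eqxx in Hne.
have pnD : forall t2, (forall tr, tr \in binternal t2 -> tr.1.1 = p -> tr = (p, blabel a, blabel d)) ->
    p \notin Delta (RTree (rroot G') t2) rho.
  move=> t2 P; apply/negP => /DeltaP [tr Htr [E1 E2 E3]].
  by move: (P _ Htr E1) E2 => -> /=.
have Removal : (forall l, d1 p = Some l -> l \notin bleaves t1) -> False.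
  move=> Hdl; apply: (improve_counts (t2 := t1) HS HO).
  - by move=> v; have := C1 v; rewrite -/t; slia.
  - by move=> v; have := L1 v; rewrite -/t; slia.
  - exact: B1.
  - exact: T1.
  - left; exists p; split=> //; first exact: pnD P1.
    rewrite /inL; case E: (d1 p) => [l|] //; apply/negP => /(mem_subseq (filter_subseq _ _)).
    by apply/negP; exact: Hdl.
case Ed: (d1 p) => [l|]; last by apply: Removal => l; rewrite Ed.
have [Hl Erl] := Dl _ _ HpD Ed.
move: (Hl); rewrite mem_filter /rleaves -/t => /andP[HlG Hlt].
case: (boolP ((l \in bnodes b) || (l \in bnodes c))) => Hlbc.
  apply: Removal => l'; rewrite Ed => -[<-]; apply/negP => /leaves_nodes.
  rewrite cm_pos; have := C1 l; have := Ux l.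
  by case/orP: Hlbc => /cm_in; slia.
move: Hlbc; rewrite negb_or => /andP[Hlb Hlc].
have lt1 : l \in bleaves t1.
  rewrite cm_pos; have := L1 l; have := cm_in Hlt.
  have := cm_leaves_nodes l b; have := cm_leaves_nodes l c.
  rewrite (cm_notin Hlb) (cm_notin Hlc); slia.
have Hsl := leaf_isub lt1.
have plne : p <> l.
  move=> E; have := isub_unique Ut Hs (leaf_isub Hlt); rewrite /= E => /(_ erefl) //.
set u2 := BNode l c b.
set t2 := repl t1 l u2.
have C2 : forall v, cm v (bnodes t2) + (x == v) + (y == v) = cm v (bnodes t).
  move=> v; have := repl_cm_leaf u2 v Ut1 Hsl; rewrite -/t2 /u2 nodes_BNode cm_cons cm_cat.
  have := C1 v; slia.
have L2 : forall v, cm v (bleaves t2) + (l == v) = cm v (bleaves t).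
  move=> v; have := repl_cmL_leaf u2 v Ut1 Hsl; rewrite -/t2 /u2 leaves_BNode cm_cat.
  have := L1 v; slia.
apply: (improve_counts (t2 := t2) HS HO).
- by move=> v; have := C2 v; rewrite -/t; slia.
- by move=> v; have := L2 v; rewrite -/t; slia.
- apply: repl_bext; first exact: B1.
  + by move=> t0 H0 E0; apply: (isub_unique Ut1 H0 Hsl); rewrite E0.
  + move=> g' Hg' /bext_leaf_inv E; subst g'.
    by move: HlG; rewrite (isub_leaf_mem Hg').
- move=> tr /repl_internal [|[tr' H1 [-> _]]].
  + rewrite /u2 /= inE mem_cat => /orP[/eqP ->|/orP[H|H]].
    * right; exists (rho (blabel a)), (rho (blabel b)); by rewrite /= -Erl Eca.
    * by left; apply: eqv_refl; exact: (isub_internal Hc H).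
    * by left; apply: eqv_refl; exact: (isub_internal Hb H).
  + by rewrite /u2 /= fixc_id; exact: T1.
- left; exists p; split=> //.
  + apply: pnD => tr /repl_internal [|[tr' H1 [E Hne]]].
    * rewrite /u2 /= inE mem_cat => /orP[/eqP ->|/orP[H|H]] /= Ep.
      -- by case: plne.
      -- by case: pbc; rewrite -Ep (heads_in H).
      -- by case: pbc; rewrite -Ep (heads_in H).
    * rewrite E /u2 /= fixc_id; exact: P1.
  + rewrite /inL Ed; apply: notin_Lambda; rewrite cm_pos.
    have := L2 l; have := cm_leaves_nodes l t; have := Ux l; rewrite eqxx /=; slia.
Qed.

Lemma btree_eq_dec (t1 t2 : btree) : {t1 = t2} + {t1 <> t2}.
Proof. decide equality; exact: PeanoNat.Nat.eq_dec. Qed.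

Definition confined (X : seq nat) (t : btree) (Y : seq nat) :=
  forall w, w \in X -> w \in bnodes t -> w \in Y.

Lemma uniq_node_facts v l' r' : uniq (v :: bnodes l' ++ bnodes r') ->
  [/\ v \notin bnodes l', v \notin bnodes r' & forall w, w \in bnodes l' -> w \in bnodes r' -> False].
Proof.
rewrite /= mem_cat negb_or cat_uniq => /andP[/andP[H1 H2] /and3P[_ D _]]; split=> // w W1 W2.
by case/negP: D; apply/hasP; exists w.
Qed.

Lemma conf_liftL X v l r l' r' Y : uniq (v :: bnodes l' ++ bnodes r') ->
  {subset bnodes r <= bnodes r'} -> {subset X <= bnodes l'} -> confined X l Y ->
  confined X (BNode v l r) Y.
Proof.
move=> /uniq_node_facts [H1 H2 D] Sr SX C w Hw; rewrite nodes_BNode inE mem_cat.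
case/orP=> [/eqP E|/orP[Hl|Hr]].
- by move: (SX _ Hw); rewrite E (negbTE H1).
- exact: C.
- by case: (D w (SX _ Hw) (Sr _ Hr)).
Qed.

Lemma conf_liftR X v l r l' r' Y : uniq (v :: bnodes l' ++ bnodes r') ->
  {subset bnodes l <= bnodes l'} -> {subset X <= bnodes r'} -> confined X r Y ->
  confined X (BNode v l r) Y.
Proof.
move=> /uniq_node_facts [H1 H2 D] Sl SX C w Hw; rewrite nodes_BNode inE mem_cat.
case/orP=> [/eqP E|/orP[Hl|Hr]].
- by move: (SX _ Hw); rewrite E (negbTE H2).
- by case: (D w (Sl _ Hl) (SX _ Hw)).
- exact: C.
Qed.

Lemma find t' t'' : bext t' t'' -> uniq (bnodes t') -> t' <> t'' ->
  (exists x a b, t' = BNode x a b /\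
     ((bext a t'' /\ confined (bnodes b) t'' [::]) \/ (bext b t'' /\ confined (bnodes a) t'' [::])))
  \/ (exists p l' r' l r, [/\ isub (BNode p l' r') t', isub (BNode p l r) t'', bext l' l, bext r' r &
        [/\ confined (bnodes l') t'' (bnodes l), confined (bnodes r') t'' (bnodes r) &
        (blabel l' != blabel l) || (blabel r' != blabel r)]]).
Proof.
elim=> [v|v l' r' l r Bl IHl Br IHr|v l' r' g Bl IHl|v l' r' g Br IHr] U Ne.
- by case: Ne.
- have U' := U; move: U' => /uniq_node_facts [H1 H2 D].
  rewrite nodes_BNode in U.
  have Ul : uniq (bnodes l') by move: U; rewrite /= cat_uniq => /andP[_ /and3P[]].
  have Ur : uniq (bnodes r') by move: U; rewrite /= cat_uniq => /andP[_ /and3P[]].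
  have Sl := bext_nodes Bl; have Sr := bext_nodes Br.
  have Cl : confined (bnodes l') (BNode v l r) (bnodes l).
    by apply: (conf_liftL U Sr) => // w.
  have Cr : confined (bnodes r') (BNode v l r) (bnodes r).
    by apply: (conf_liftR U Sl) => // w.
  case: (boolP ((blabel l' != blabel l) || (blabel r' != blabel r))) => Hne.
    by right; exists v, l', r', l, r; split=> //; exact: isub_refl.
  move: Hne; rewrite negb_or !negbK => /andP[/eqP El /eqP Er].
  have [Nl|Nr] : l' <> l \/ r' <> r.
    case: (btree_eq_dec l' l) => [El'|]; last by left.
    case: (btree_eq_dec r' r) => [Er'|]; last by right.
    by case: Ne; rewrite El' Er'.
  + case: (IHl Ul Nl) => [[x [a [b [E [[Ba Cb]|[Bb Ca]]]]]]|[p [l0' [r0' [l0 [r0 [I1 I2 B1 B2 [C1 C2 N]]]]]]]].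
    * exfalso; have := bext_nodes Ba (label_in l); rewrite -El E /=.
      by move: Ul; rewrite E /= mem_cat negb_or => /andP[/andP[/negbTE -> _] _].
    * exfalso; have := bext_nodes Bb (label_in l); rewrite -El E /=.
      by move: Ul; rewrite E /= mem_cat negb_or => /andP[/andP[_ /negbTE ->] _].
    * right; exists p, l0', r0', l0, r0; split=> //; try by apply: isub_l.
      split=> //.
      - apply: (conf_liftL U Sr) => // w Hw; apply: (isub_nodes I1); rewrite nodes_BNode inE mem_cat Hw; by rewrite orbT.
      - apply: (conf_liftL U Sr) => // w Hw; apply: (isub_nodes I1); rewrite nodes_BNode inE mem_cat Hw; by rewrite !orbT.
  + case: (IHr Ur Nr) => [[x [a [b [E [[Ba Cb]|[Bb Ca]]]]]]|[p [l0' [r0' [l0 [r0 [I1 I2 B1 B2 [C1 C2 N]]]]]]]].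
    * exfalso; have := bext_nodes Ba (label_in r); rewrite -Er E /=.
      by move: Ur; rewrite E /= mem_cat negb_or => /andP[/andP[/negbTE -> _] _].
    * exfalso; have := bext_nodes Bb (label_in r); rewrite -Er E /=.
      by move: Ur; rewrite E /= mem_cat negb_or => /andP[/andP[_ /negbTE ->] _].
    * right; exists p, l0', r0', l0, r0; split=> //; try by apply: isub_r.
      split=> //.
      - apply: (conf_liftR U Sl) => // w Hw; apply: (isub_nodes I1); rewrite nodes_BNode inE mem_cat Hw; by rewrite orbT.
      - apply: (conf_liftR U Sl) => // w Hw; apply: (isub_nodes I1); rewrite nodes_BNode inE mem_cat Hw; by rewrite !orbT.
- left; exists v, l', r'; split=> //; left; split=> // w Hw Hg.
  have [_ _ D] := uniq_node_facts U; by case: (D w (bext_nodes Bl Hg) Hw).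
- left; exists v, l', r'; split=> //; right; split=> // w Hw Hg.
  have [_ _ D] := uniq_node_facts U; by case: (D w Hw (bext_nodes Br Hg)).
Qed.

Lemma invert_pruned q' q t'' : bext q' q -> uniq (bnodes q') -> blabel q' <> blabel q ->
  confined (bnodes q') t'' (bnodes q) ->
  exists y c d, q' = BNode y c d /\
    ((bext c q /\ confined (bnodes d) t'' [::]) \/ (bext d q /\ confined (bnodes c) t'' [::])).
Proof.
case=> [v|v l' r' l r _ _|v l' r' g B|v l' r' g B] U Ne C; try by case: Ne.
- exists v, l', r'; split=> //; left; split=> // w Hw Ht.
  have [_ _ D] := uniq_node_facts U.
  have Hw' : w \in bnodes (BNode v l' r') by rewrite nodes_BNode inE mem_cat Hw /= ?orbT.
  by case: (D w (bext_nodes B (C w Hw' Ht)) Hw).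
- exists v, l', r'; split=> //; right; split=> // w Hw Ht.
  have [_ _ D] := uniq_node_facts U.
  have Hw' : w \in bnodes (BNode v l' r') by rewrite nodes_BNode inE mem_cat Hw /= ?orbT.
  by case: (D w Hw (bext_nodes B (C w Hw' Ht))).
Qed.

Lemma conf_gfree G G' G'' d : wf G' -> rroot G'' = rroot G' -> extension G'' G ->
  isub d (rchild G') -> confined (bnodes d) (rchild G'') [::] -> Gfree G d.
Proof.
move=> wf1 Er [_ Er2 B] H C w Hw; rewrite /rnodes inE negb_or; apply/andP; split.
- apply/eqP => E.
  have Hr : rroot G' \in bnodes (rchild G') by rewrite -Er Er2 -E (isub_nodes H Hw).
  by move: wf1; rewrite /wf /rnodes /= Hr.
- by apply/negP => /(bext_nodes B) Hg; move: (C w Hw Hg).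
Qed.

Lemma pruned_side G S phi G' rho d1 y c d q :
  setting G S phi -> optimal G G' S phi rho d1 -> isub (BNode y c d) (rchild G') ->
  (bext c q /\ Gfree G d) \/ (bext d q /\ Gfree G c) ->
  (rho y, rho (blabel c), rho (blabel d)) \in rinternal S /\
  ((bext c q /\ Gfree G d /\ sd (rchild S) (rho (blabel c)) (rho (blabel q))) \/
   (bext d q /\ Gfree G c /\ sd (rchild S) (rho (blabel d)) (rho (blabel q)))).
Proof.
move=> HS HO H K.
have HO' := HO; case: HO' => [[[wf1 root1 bext1] Rin Cons Phi _] _].
have wfS : wf S by case: HS.
have US := wf_uniq_child wfS.
have [[Ec Ed]|[sl [sr [Tr [Esl Esr]]]]] := proj2 Cons _ _ _ (isub_internal_mem H).
  case: K => [[_ F]|[_ F]].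
  - by case: (caseA HS HO H (or_intror erefl) F).
  - by case: (caseA HS HO H (or_introl erefl) F).
subst sl sr; split=> //.
have [Hc Hd] := schild_of Tr.
have Hc' : isub c (rchild G') by apply: isub_trans H; apply: isub_l; exact: isub_refl.
have Hd' : isub d (rchild G') by apply: isub_trans H; apply: isub_r; exact: isub_refl.
case: K => [[B F]|[B F]]; [left|right]; do 2 split=> //.
- exact: mono US (cons_sub Cons Hc') (proj2 (schild_in Hc)) _ (bext_nodes B (label_in q)).
- exact: mono US (cons_sub Cons Hd') (proj2 (schild_in Hd)) _ (bext_nodes B (label_in q)).
Qed.

Lemma helperP T sx tau m p : uniq (bnodes T) -> schild T sx tau -> sd T tau m ->
  (p = sx \/ schild T p sx) -> (m = p \/ schild T p m) -> p = sx /\ m <> p.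
Proof.
move=> U Ht Hm Gp Gm.
have Hsx : sd T sx m := sd_trans U (schild_sd Ht) Hm.
case: Gm => [Emp|Cpm].
- exfalso; case: Gp => [Epx|Cpx].
  + by apply: (schild_nsd U Ht); rewrite -Epx -Emp.
  + by apply: (schild_nsd U Cpx); rewrite -Emp.
- case: Gp => [Epx|Cpx]; first by split=> //; move=> E; apply: (schild_neq U Cpm).
  exfalso; case: (m =P sx) => [Ems|Nms].
  + by apply: (schild_nsd U Ht); rewrite -Ems.
  + apply: (schild_disj U Cpx Cpm (fun E => Nms (esym E)) Hsx); apply: sd_refl; exact: sd_in Hm.
Qed.

Lemma side G S phi G' G'' rho d1 q' q sg :
  setting G S phi -> optimal G G' S phi rho d1 ->
  rroot G'' = rroot G' -> extension G'' G ->
  isub q' (rchild G') -> bext q' q -> confined (bnodes q') (rchild G'') (bnodes q) ->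
  rho (blabel q') = sg -> schild (rchild S) sg (rho (blabel q)) ->
  exists y c d, [/\ q' = BNode y c d, rho y = sg, (sg, rho (blabel c), rho (blabel d)) \in rinternal S &
    (bext c q /\ Gfree G d /\ sd (rchild S) (rho (blabel c)) (rho (blabel q))) \/
    (bext d q /\ Gfree G c /\ sd (rchild S) (rho (blabel d)) (rho (blabel q)))].
Proof.
move=> HS HO Er E2 Hq B C Eq Ch.
have HO' := HO; case: HO' => [[[wf1 root1 bext1] Rin Cons Phi _] _].
have wfS : wf S by case: HS.
have US := wf_uniq_child wfS.
have Ut : uniq (bnodes (rchild G')) := wf_uniq_child wf1.
have Ne : blabel q' <> blabel q.
  by move=> E; apply: (schild_neq US Ch); rewrite -Eq E.
have [y [c [d [Eq' K]]]] := invert_pruned B (isub_uniq_nodes Hq Ut) Ne C.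
subst q'.
have K' : (bext c q /\ Gfree G d) \/ (bext d q /\ Gfree G c).
  case: K => [[Bc Cd]|[Bd Cc]]; [left|right]; split=> //.
  - apply: (conf_gfree wf1 Er E2 _ Cd); apply: isub_trans Hq; apply: isub_r; exact: isub_refl.
  - apply: (conf_gfree wf1 Er E2 _ Cc); apply: isub_trans Hq; apply: isub_l; exact: isub_refl.
have [Tr R] := pruned_side HS HO Hq K'.
by exists y, c, d; split=> //; rewrite -Eq.
Qed.

Lemma caseB_core G S phi G' G'' rho d1 p l' r' l r :
  setting G S phi -> optimal G G' S phi rho d1 ->
  rroot G'' = rroot G' -> extension G'' G ->
  isub (BNode p l' r') (rchild G') -> bext l' l -> bext r' r ->
  confined (bnodes l') (rchild G'') (bnodes l) -> confined (bnodes r') (rchild G'') (bnodes r) ->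
  rho (blabel l') = rho p -> rho (blabel r') = rho p ->
  (rho p, rho (blabel l), rho (blabel r)) \in rinternal S -> False.
Proof.
move=> HS HO Er E2 Hp Bl Br Cl Cr El Er' Tr.
have wfS : wf S by case: HS.
have US := wf_uniq_child wfS.
have [Chl Chr] := schild_of Tr.
have [_ _ Dlr] := internal_distinct US Tr.
have Hl' : isub l' (rchild G') by apply: isub_trans Hp; apply: isub_l; exact: isub_refl.
have Hr' : isub r' (rchild G') by apply: isub_trans Hp; apply: isub_r; exact: isub_refl.
have [x [a [b [E1 Ex Ta K1]]]] := side HS HO Er E2 Hl' Bl Cl El Chl.
have [y [c [d [E3 Ey Tc K2]]]] := side HS HO Er E2 Hr' Br Cr Er' Chr.
have [Ea Eb] := internal_unique US Ta Tr.
have [Ec Ed] := internal_unique US Tc Tr.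
have Fb : Gfree G b.
  case: K1 => [[_ [F _]]//|[_ [_ Sb]]]; exfalso.
  rewrite Eb in Sb; apply: (schild_disj US Chl Chr Dlr _ Sb); apply: sd_refl.
  exact: proj2 (schild_in Chl).
have Fc : Gfree G c.
  case: K2 => [[_ [_ Sc]]|[_ [F _]]//]; exfalso.
  rewrite Ec in Sc; apply: (schild_disj US Chl Chr Dlr Sc); apply: sd_refl.
  exact: proj2 (schild_in Chr).
subst l' r'.
apply: (caseD HS HO Hp Fb Fc Ex Ey) => //.
- by rewrite Ec Ea.
- by rewrite Ed Eb.
Qed.

Lemma opt_minimal G S phi G' rho d1 : setting G S phi -> optimal G G' S phi rho d1 ->
  ~ exists G'', [/\ extension G' G'', G' <> G'', extension G'' G & consistent S rho G''].
Proof.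
move=> HS HO [G'' [[wf1 Er B] Neq E2 Cons2]].
have HO' := HO; case: HO' => [[[_ root1 bext1] Rin Cons Phi _] _].
have wfS : wf S by case: HS.
have US := wf_uniq_child wfS.
have Ut := wf_uniq_child wf1.
have Er' : rroot G'' = rroot G' by rewrite Er.
have Ne : rchild G' <> rchild G''.
  move=> E; apply: Neq; destruct G', G''; simpl in *; congruence.
case: (find B Ut Ne) => [[x [a [b [Et K]]]]|[p [l' [r' [l [r [I1 I2 Bl Br [Cl Cr N]]]]]]]].
- have Hs : isub (BNode x a b) (rchild G') by rewrite Et; exact: isub_refl.
  have Ha : isub a (rchild G') by apply: isub_trans Hs; apply: isub_l; exact: isub_refl.
  have Hb : isub b (rchild G') by apply: isub_trans Hs; apply: isub_r; exact: isub_refl.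
  have Tx : (x, blabel a, blabel b) \in rinternal G' by rewrite /rinternal Et inE eqxx.
  case: K => [[Ba Cb]|[Bb Ca]].
  + have Fb := conf_gfree wf1 Er' E2 Hb Cb.
    case: (proj2 Cons _ _ _ Tx) => [[E3 E4]|[sl [sr [T [E5 E6]]]]].
    * exact: (caseA HS HO (isub_refl _) (or_intror Et) Fb (esym E4) (esym E3)).
    * by subst sl sr; apply: (caseC HS HO _ Fb); right; split; [exact: Et|exact: T].
  + have Fa := conf_gfree wf1 Er' E2 Ha Ca.
    case: (proj2 Cons _ _ _ Tx) => [[E3 E4]|[sl [sr [T [E5 E6]]]]].
    * exact: (caseA HS HO (isub_refl _) (or_introl Et) Fa (esym E3) (esym E4)).
    * by subst sl sr; apply: (caseC HS HO _ Fa); left; split; [exact: Et|exact: T].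
- have Hl' : isub l' (rchild G') by apply: isub_trans I1; apply: isub_l; exact: isub_refl.
  have Hr' : isub r' (rchild G') by apply: isub_trans I1; apply: isub_r; exact: isub_refl.
  have T1 := isub_internal_mem I1.
  have T2 := isub_internal_mem I2.
  have Conv : forall q' q, isub q' (rchild G') ->
      (exists y c d, q' = BNode y c d /\
        ((bext c q /\ confined (bnodes d) (rchild G'') [::]) \/ (bext d q /\ confined (bnodes c) (rchild G'') [::]))) ->
      exists y c d, [/\ q' = BNode y c d, isub (BNode y c d) (rchild G') &
        (bext c q /\ Gfree G d) \/ (bext d q /\ Gfree G c)].
    move=> q' q Hq [y [c [d [Eq K]]]]; subst q'; exists y, c, d; split=> //.
    case: K => [[Bc Cd]|[Bd Cc]]; [left|right]; split=> //.
    - apply: (conf_gfree wf1 Er' E2 _ Cd); apply: isub_trans Hq; apply: isub_r; exact: isub_refl.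
    - apply: (conf_gfree wf1 Er' E2 _ Cc); apply: isub_trans Hq; apply: isub_l; exact: isub_refl.
  case/orP: N => Nl.
  + have Ul' := isub_uniq_nodes Hl' Ut.
    have [x [a [b [El' Hx K']]]] := Conv _ _ Hl' (invert_pruned Bl Ul' (elimN eqP Nl) Cl).
    have [Tx R] := pruned_side HS HO Hx K'.
    have Exl : blabel l' = x by rewrite El'.
    have [tau [Htau Hsd]] : exists tau, schild (rchild S) (rho x) tau /\ sd (rchild S) tau (rho (blabel l)).
      case: R => [[_ [_ S1]]|[_ [_ S1]]]; [exists (rho (blabel a))|exists (rho (blabel b))]; split=> //;
        [exact: (schild_of Tx).1|exact: (schild_of Tx).2].
    have Gp : rho p = rho x \/ schild (rchild S) (rho p) (rho x).
      case: (proj2 Cons _ _ _ T1) => [[E _]|[sl [sr [Tp [Esl _]]]]].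
      * by left; rewrite E Exl.
      * by right; exists sr; left; rewrite -Exl Esl.
    have Gm : rho (blabel l) = rho p \/ schild (rchild S) (rho p) (rho (blabel l)).
      case: (proj2 Cons2 _ _ _ T2) => [[E _]|[ml [mr [Tm [Eml _]]]]].
      * by left; rewrite E.
      * by right; exists mr; left; rewrite Eml.
    have [Epx Nlp] := helperP US Htau Hsd Gp Gm.
    have Tm : (rho p, rho (blabel l), rho (blabel r)) \in rinternal S.
      case: (proj2 Cons2 _ _ _ T2) => [[E _]|[ml [mr [Tm [Eml Emr]]]]].
      * by case: Nlp; rewrite E.
      * by rewrite Eml Emr.
    have [E1 E2'] : rho (blabel l') = rho p /\ rho (blabel r') = rho p.
      case: (proj2 Cons _ _ _ T1) => [[E E']|[sl [sr [Tp [Esl Esr]]]]]; first by split.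
      exfalso; have [D1 _ _] := internal_distinct US Tp; apply: D1.
      by rewrite -Esl Exl Epx.
    exact: (caseB_core HS HO Er' E2 I1 Bl Br Cl Cr E1 E2' Tm).
  + have Ur' := isub_uniq_nodes Hr' Ut.
    have [x [a [b [Er'' Hx K']]]] := Conv _ _ Hr' (invert_pruned Br Ur' (elimN eqP Nl) Cr).
    have [Tx R] := pruned_side HS HO Hx K'.
    have Exr : blabel r' = x by rewrite Er''.
    have [tau [Htau Hsd]] : exists tau, schild (rchild S) (rho x) tau /\ sd (rchild S) tau (rho (blabel r)).
      case: R => [[_ [_ S1]]|[_ [_ S1]]]; [exists (rho (blabel a))|exists (rho (blabel b))]; split=> //;
        [exact: (schild_of Tx).1|exact: (schild_of Tx).2].
    have Gp : rho p = rho x \/ schild (rchild S) (rho p) (rho x).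
      case: (proj2 Cons _ _ _ T1) => [[_ E]|[sl [sr [Tp [_ Esr]]]]].
      * by left; rewrite E Exr.
      * by right; exists sl; right; rewrite -Exr Esr.
    have Gm : rho (blabel r) = rho p \/ schild (rchild S) (rho p) (rho (blabel r)).
      case: (proj2 Cons2 _ _ _ T2) => [[_ E]|[ml [mr [Tm [_ Emr]]]]].
      * by left; rewrite E.
      * by right; exists ml; right; rewrite Emr.
    have [Epx Nrp] := helperP US Htau Hsd Gp Gm.
    have Tm : (rho p, rho (blabel l), rho (blabel r)) \in rinternal S.
      case: (proj2 Cons2 _ _ _ T2) => [[_ E]|[ml [mr [Tm [Eml Emr]]]]].
      * by case: Nrp; rewrite E.
      * by rewrite Eml Emr.
    have [E1 E2'] : rho (blabel l') = rho p /\ rho (blabel r') = rho p.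
      case: (proj2 Cons _ _ _ T1) => [[E E']|[sl [sr [Tp [Esl Esr]]]]]; first by split.
      exfalso; have [_ D2 _] := internal_distinct US Tp; apply: D2.
      by rewrite -Esr Exr Epx.
    exact: (caseB_core HS HO Er' E2 I1 Bl Br Cl Cr E1 E2' Tm).
Qed.

Theorem lemma15 (G S : rtree) (phi : nat -> nat)
    (G' : rtree) (rho : nat -> nat) (delta : nat -> option nat) :
  setting G S phi ->
  optimal G G' S phi rho delta ->
  exists (G1 : rtree) (rho1 : nat -> nat) (delta1 : nat -> option nat),
    minimal G G1 S phi rho1 delta1 /\
    completion G S phi G1 rho1 delta1 G' rho delta.
Proof.
move=> HS HO; exists G', rho, delta.
have HO' := HO; case: HO' => [R Opt].
have wf1 : wf G' by case: R => [[]].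
split; first by split=> //; exact: opt_minimal HS HO.
split.
- split=> //; by split=> //; exact: bext_refl.
- by move=> G3 rho3 delta3 [_ R3 _ _ _]; exact: Opt.
Qed.
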